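(* Let $R$ be a ring and $n \geq 0$. The following are equivalent: (1) $R$ is $n$-coherent; (2) the class $\mathrm{FP}_n$ of left $R$-modules is thick; (3) $\mathrm{FP}_n = \mathrm{FP}_\infty$.
   Context: $R$ is an associative ring with unit; modules are left $R$-modules. For $n \ge 0$, a module $M$ is finitely $n$-presented if there is an exact sequence $F_n \to \cdots \to F_0 \to M \to 0$ with every $F_i$ finitely generated free; $\mathrm{FP}_n$ is the class of such modules. $\mathrm{FP}_\infty$ is the class of modules having a projective resolution by finitely generated free modules (equivalently $\bigcap_{n\ge0}\mathrm{FP}_n$). $R$ is $n$-coherent if $\mathrm{FP}_n \subseteq \mathrm{FP}_{n+1}$. A class $\mathcal W$ of modules is thick if it is closed under direct summands and, whenever $0 \to A \to B \to C \to 0$ is exact with two of $A,B,C$ in $\mathcal W$, the third is in $\mathcal W$. *)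

(* Defs.v *)
From HB Require Import structures.
From mathcomp Require Import all_boot all_order all_algebra.
Set Implicit Arguments. Unset Strict Implicit. Unset Printing Implicit Defensive.
Import GRing.Theory.
Local Open Scope ring_scope.

(* Left R-modules are [lmodType R]; the finitely generated free module of rank
   k is the row-vector module 'rV[R]_k (scalars act on the left, entrywise). *)

Definition exact_at (R : pzRingType) (A B C : lmodType R)
  (f : {linear A -> B}) (g : {linear B -> C}) : Prop :=
  forall b : B, g b = 0 <-> exists a : A, f a = b.

(* A family of maps  ... -> F_{i+1} --d i--> F_i -> ... -> F_0 --eps--> M,
   with F_i = R^(k i) finitely generated free.  [free_complex_exact_upto n]
   says that F_n -> ... -> F_0 -> M -> 0 is exact, i.e. eps is surjective
   and the sequence is exact at F_0, ..., F_{n-1}. *)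
Definition free_complex_exact_upto (R : pzRingType) (M : lmodType R) (n : nat)
  (k : nat -> nat) (d : forall i, {linear 'rV[R]_(k i.+1) -> 'rV[R]_(k i)})
  (eps : {linear 'rV[R]_(k 0) -> M}) : Prop :=
  (forall m : M, exists x, eps x = m) /\
  ((0 < n)%N -> exact_at (d 0) eps) /\
  (forall i, (i.+1 < n)%N -> exact_at (d i.+1) (d i)).

Definition FPn (R : pzRingType) (n : nat) (M : lmodType R) : Prop :=
  exists (k : nat -> nat) (d : forall i, {linear 'rV[R]_(k i.+1) -> 'rV[R]_(k i)})
         (eps : {linear 'rV[R]_(k 0) -> M}),
    free_complex_exact_upto n d eps.

Definition FPinf (R : pzRingType) (M : lmodType R) : Prop :=
  exists (k : nat -> nat) (d : forall i, {linear 'rV[R]_(k i.+1) -> 'rV[R]_(k i)})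
         (eps : {linear 'rV[R]_(k 0) -> M}),
    (forall m : M, exists x, eps x = m) /\
    exact_at (d 0) eps /\
    (forall i, exact_at (d i.+1) (d i)).

Definition n_coherent (R : pzRingType) (n : nat) : Prop :=
  forall M : lmodType R, FPn n M -> FPn n.+1 M.

Definition direct_summand (R : pzRingType) (A M : lmodType R) : Prop :=
  exists (i : {linear A -> M}) (p : {linear M -> A}), forall a, p (i a) = a.

Definition short_exact (R : pzRingType) (A B C : lmodType R)
  (f : {linear A -> B}) (g : {linear B -> C}) : Prop :=
  injective f /\ (forall c : C, exists b, g b = c) /\ exact_at f g.

Definition thick (R : pzRingType) (W : lmodType R -> Prop) : Prop :=
  (forall A M : lmodType R, W M -> direct_summand A M -> W A) /\
  (forall (A B C : lmodType R) (f : {linear A -> B}) (g : {linear B -> C}),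
     short_exact f g ->
     (W A -> W B -> W C) /\ (W A -> W C -> W B) /\ (W B -> W C -> W A)).

(* Main.v *)
Require Import Defs.
From HB Require Import structures.
From mathcomp Require Import all_boot all_order all_algebra.
From Stdlib Require Import ClassicalEpsilon.

Module Helpers.
Set Implicit Arguments. Unset Strict Implicit. Unset Printing Implicit Defensive.
Import GRing.Theory.
Local Open Scope ring_scope.

Section MkLin.
Variables (R : pzRingType) (U V : lmodType R) (h : U -> V).
Hypothesis H : forall a x y, h (a *: x + y) = a *: h x + h y.
Definition mkLin : {linear U -> V} :=
  HB.pack_for {linear U -> V} h (GRing.isLinear.Build R U V *:%R h (fun a x y => H a x y)).
Lemma mkLinE x : mkLin x = h x. Proof. by []. Qed.
End MkLin.

Section Ker.
Variables (R : pzRingType) (U V : lmodType R) (f : {linear U -> V}).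
Definition kerP : pred U := fun x => f x == 0.
Lemma kerP_closed : subsemimod_closed kerP.
Proof.
split; first split.
- by rewrite /kerP unfold_in /= linear0.
- by move=> x y; rewrite !unfold_in /= linearD => /eqP -> /eqP ->; rewrite addr0.
- move=> a x; rewrite !unfold_in /= => /eqP H; rewrite linearZ /= H; apply/eqP; exact: scaler0.
Qed.
HB.instance Definition _ := GRing.isSubmodClosed.Build R U kerP kerP_closed.
Record kerT := KerT { kval : U; kvalP : kval \in kerP }.
HB.instance Definition _ := [isSub for kval].
HB.instance Definition _ := [Choice of kerT by <:].
HB.instance Definition _ := [SubChoice_isSubLmodule of kerT by <:].
Definition kincl : {linear kerT -> U} := mkLin (fun a x y => erefl (kval (a *: x + y))).
Lemma kinclE x : kincl x = kval x. Proof. by []. Qed.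
Lemma kval0 (x : kerT) : f (kval x) = 0.
Proof. exact/eqP/(kvalP x). Qed.
Lemma kval_inj : injective kval.
Proof. exact: val_inj. Qed.
Lemma kval_eq0 (x : kerT) : (kval x = 0) <-> x = 0.
Proof. split=> [H|->//]; exact: kval_inj. Qed.

Variables (W : lmodType R) (g : {linear W -> U}).
Hypothesis Hg : forall w, f (g w) = 0.
Definition cores_fun (w : W) : kerT := KerT (introT eqP (Hg w) : g w \in kerP).
Lemma cores_lin a x y : cores_fun (a *: x + y) = a *: cores_fun x + cores_fun y.
Proof. apply: kval_inj; by rewrite /= linearP. Qed.
Definition cores : {linear W -> kerT} := mkLin cores_lin.
Lemma coresE w : kval (cores w) = g w. Proof. by []. Qed.
End Ker.

Section KMap.
Variables (R : pzRingType) (U1 V1 U2 V2 : lmodType R).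
Variables (e1 : {linear U1 -> V1}) (e2 : {linear U2 -> V2}) (phi : {linear U1 -> U2}).
Hypothesis H : forall x, e1 x = 0 -> e2 (phi x) = 0.
Lemma kmap_subproof (x : kerT e1) : e2 ((phi \o kincl e1) x) = 0.
Proof. by apply: H; rewrite /= kval0. Qed.
Definition kmap : {linear kerT e1 -> kerT e2} := cores kmap_subproof.
Lemma kmapE x : kval (kmap x) = phi (kval x). Proof. by []. Qed.
End KMap.


Section P.
Variable R : pzRingType.
Notation F k := 'rV[R]_k.
Definition surj (U V : Type) (h : U -> V) := forall v, exists u, h u = v.
Definition fg (M : lmodType R) := exists k (e : {linear F k -> M}), surj e.
Fixpoint P (m : nat) (M : lmodType R) : Prop :=
  match m with
  | 0 => fg M
  | m'.+1 => exists k (e : {linear F k -> M}), surj e /\ P m' (kerT e)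
  end.

Lemma P_iso m (M N : lmodType R) (phi : {linear M -> N}) :
  injective phi -> surj phi -> P m M -> P m N.
Proof.
elim: m M N phi => [|m IH] M N phi Hi Hs.
  case=> k [e He]; exists k, (phi \o e) => v.
  case: (Hs v) => u <-; case: (He u) => x <-; by exists x.
case=> k [e [He HK]]; exists k, (phi \o e); split.
  move=> v; case: (Hs v) => u <-; case: (He u) => x <-; by exists x.
have H : forall x, e x = 0 -> (phi \o e) (idfun x) = 0.
  by move=> x /= ->; rewrite linear0.
apply: (IH _ _ (kmap H) _ _ HK).
  by move=> x y /(congr1 (@kval _ _ _ _)); rewrite !kmapE => /kval_inj.
move=> y.
have Hy : e (kval y) = 0.
  apply: Hi; rewrite linear0; exact: (kval0 y).
exists (KerT (introT eqP Hy : kval y \in kerP e)); exact: kval_inj.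
Qed.

Lemma P_triv m (M : lmodType R) : (forall x : M, x = 0) -> P m M.
Proof.
elim: m M => [|m IH] M HM.
  have Hz : forall (a : R) (x y : F 0), (0 : M) = a *: 0 + 0.
    by move=> a x y; rewrite scaler0 addr0.
  exists 0%N, (@mkLin _ (F 0) M (fun _ => 0) (fun a x y => Hz a x y)) => v; exists 0; by rewrite [v]HM.
have Hz : forall (a : R) (x y : F 0), (0 : M) = a *: 0 + 0.
  by move=> a x y; rewrite scaler0 addr0.
exists 0%N, (@mkLin _ (F 0) M (fun _ => 0) (fun a x y => Hz a x y)); split.
  move=> v; exists 0; by rewrite [v]HM.
apply: IH => x; apply: kval_inj; exact: thinmx0.
Qed.

Lemma P_free m k : P m (F k).
Proof.
case: m => [|m]; exists k, (mkLin (fun a (x y : F k) => erefl (a *: x + y))).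
  by move=> v; exists v.
split; first by move=> v; exists v.
apply: P_triv => x; apply: kval_inj; rewrite /=.
by have := kval0 x; rewrite mkLinE.
Qed.

Lemma P_mono m M : P m.+1 M -> P m M.
Proof.
elim: m M => [|m IH] M.
  by case=> k [e [He _]]; exists k, e.
case=> k [e [He HK]]; exists k, e; split => //; exact: IH.
Qed.

Lemma P_fg m M : P m M -> fg M.
Proof. elim: m M => [//|m IH] M /P_mono; exact: IH. Qed.

Lemma liftF k (B C : lmodType R) (g : {linear B -> C}) (eC : {linear F k -> C}) :
  surj g -> exists h : {linear F k -> B}, forall x, g (h x) = eC x.
Proof.
move=> Hg.
have [bs Hbs] : exists bs : 'I_k -> B, forall j, g (bs j) = eC (delta_mx 0 j).
  apply: (@fin_all_exists _ (fun _ => B) (fun j b => g b = eC (delta_mx 0 j))) => j; exact: Hg.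
have Hl : forall a (x y : F k), \sum_j (a *: x + y) 0 j *: bs j =
   a *: (\sum_j x 0 j *: bs j) + \sum_j y 0 j *: bs j.
  move=> a x y; rewrite scaler_sumr -big_split /=; apply: eq_bigr => j _.
  by rewrite !mxE scalerDl scalerA.
exists (mkLin Hl) => x; rewrite mkLinE linear_sum.
rewrite [in RHS](row_sum_delta x) linear_sum; apply: eq_bigr => j _.
by rewrite !linearZ /= Hbs.
Qed.

Lemma finvL (W A B : lmodType R) (f : {linear A -> B}) (q : {linear W -> B}) :
  injective f -> (forall w, exists a, f a = q w) ->
  exists r : {linear W -> A}, forall w, f (r w) = q w.
Proof.
move=> Hf Hq.
have Hq' : forall w, exists a, f a == q w.
  by move=> w; case: (Hq w) => a Ha; exists a; apply/eqP.
pose r w := xchoose (Hq' w).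
have Hr : forall w, f (r w) = q w by move=> w; exact/eqP/(xchooseP (Hq' w)).
have Hl : forall a x y, r (a *: x + y) = a *: r x + r y.
  by move=> a x y; apply: Hf; rewrite linearP /= !Hr linearP.
by exists (mkLin Hl) => w; rewrite mkLinE.
Qed.
End P.


Section H.
Variable R : pzRingType.
Notation F k := 'rV[R]_k.

Definition mkK (U V : lmodType R) (f : {linear U -> V}) (x : U) (H : f x = 0) : kerT f :=
  KerT (introT eqP H : x \in kerP f).
Lemma mkKE (U V : lmodType R) (f : {linear U -> V}) (x : U) (H : f x = 0) : kval (mkK H) = x.
Proof. by []. Qed.

Lemma ses_gf (A B C : lmodType R) (f : {linear A -> B}) (g : {linear B -> C}) :
  exact_at f g -> forall a, g (f a) = 0.
Proof. by move=> Hx a; apply/(Hx (f a)); exists a. Qed.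

Lemma horse a c (A B C : lmodType R) (f : {linear A -> B}) (g : {linear B -> C})
  (eA : {linear F a -> A}) (eC : {linear F c -> C}) :
  short_exact f g -> surj eA -> surj eC ->
  exists eB : {linear F (a + c) -> B}, surj eB /\
    exists (i : {linear kerT eA -> kerT eB}) (p : {linear kerT eB -> kerT eC}), short_exact i p.
Proof.
move=> [Hf [Hg Hx]] HA HC.
have gf := ses_gf Hx.
have [h Hh] := liftF eC Hg.
pose eBf (x : F (a + c)) := f (eA (lsubmx x)) + h (rsubmx x).
have HeB : forall r x y, eBf (r *: x + y) = r *: eBf x + eBf y.
  move=> r x y; rewrite /eBf; rewrite [lsubmx _]linearP [rsubmx _]linearP /=.
  rewrite !linearP /= scalerDr addrACA //.
pose eB := mkLin HeB.
have eBE : forall x, eB x = f (eA (lsubmx x)) + h (rsubmx x) by [].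
exists eB; split.
  move=> b; have [v Hv] := HC (g b).
  have : g (b - h v) = 0 by rewrite linearB /= Hh Hv subrr.
  case/Hx => a0 Ha0; have [u Hu] := HA a0.
  by exists (row_mx u v); rewrite eBE row_mxKl row_mxKr Hu Ha0 subrK.
have Hphi : forall r (x y : F a), row_mx (r *: x + y) (0 : F c) =
    r *: row_mx x 0 + row_mx y 0.
  by move=> r x y; rewrite scale_row_mx add_row_mx scaler0 addr0.
pose phi := mkLin Hphi.
have phiE : forall x, phi x = row_mx x 0 by [].
have Hi : forall x, eA x = 0 -> eB (phi x) = 0.
  by move=> x Hx0; rewrite eBE phiE row_mxKl row_mxKr Hx0 !linear0 addr0.
pose rs : {linear F (a + c) -> F c} := mkLin (fun r (x y : F (a + c)) => linearP (@rsubmx R 1 a c) r x y).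
have rsE : forall x, rs x = rsubmx x by [].
have Hp : forall x, eB x = 0 -> eC (rs x) = 0.
  move=> x Hx0; rewrite rsE -Hh.
  have -> : h (rsubmx x) = eB x - f (eA (lsubmx x)) by rewrite eBE addrC addKr.
  by rewrite Hx0 sub0r linearN /= gf oppr0.
exists (kmap Hi), (kmap Hp); split; [|split].
- move=> x y /(congr1 (@kval _ _ _ _)); rewrite !kmapE !phiE => /(congr1 lsubmx).
  by rewrite !row_mxKl => /kval_inj.
- move=> v; have Hv := kval0 v; rewrite -Hh in Hv.
  case/Hx: Hv => a0 Ha0; have [u Hu] := HA a0.
  have Hz : eB (row_mx (- u) (kval v)) = 0.
    by rewrite eBE row_mxKl row_mxKr !linearN /= Hu Ha0 addNr.
  by exists (mkK Hz); apply: kval_inj; rewrite kmapE mkKE rsE row_mxKr.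
- move=> x; split.
    move/kval_eq0; rewrite kmapE rsE => Hr.
    have Hx0 := kval0 x; rewrite eBE Hr linear0 addr0 in Hx0.
    have Hu : eA (lsubmx (kval x)) = 0 by apply: Hf; rewrite Hx0 linear0.
    exists (mkK Hu); apply: kval_inj; rewrite kmapE phiE mkKE -Hr.
    exact: hsubmxK.
  by case=> y <-; apply/kval_eq0; rewrite !kmapE rsE phiE row_mxKr.
Qed.

Lemma P_ext m (A B C : lmodType R) (f : {linear A -> B}) (g : {linear B -> C}) :
  short_exact f g -> P m A -> P m C -> P m B.
Proof.
elim: m A B C f g => [|m IH] A B C f g Hs.
  case=> a [eA HA] [c [eC HC]].
  have [eB [HB _]] := horse Hs HA HC; by exists (a + c)%N, eB.
case=> a [eA [HA KA]] [c [eC [HC KC]]].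
have [eB [HB [i [p Hip]]]] := horse Hs HA HC.
exists (a + c)%N, eB; split => //; exact: IH Hip KA KC.
Qed.
End H.


Section H2.
Variable R : pzRingType.
Notation F k := 'rV[R]_k.

Definition idL (U : lmodType R) : {linear U -> U} := mkLin (fun a (x y : U) => erefl (a *: x + y)).
Lemma idLE (U : lmodType R) (x : U) : idL U x = x. Proof. by []. Qed.

Lemma sc1 (U V : lmodType R) a (z : U * V) : (a *: z).1 = a *: z.1. Proof. by []. Qed.
Lemma sc2 (U V : lmodType R) a (z : U * V) : (a *: z).2 = a *: z.2. Proof. by []. Qed.
Lemma ad1 (U V : lmodType R) (z w : U * V) : (z + w).1 = z.1 + w.1. Proof. by []. Qed.
Lemma ad2 (U V : lmodType R) (z w : U * V) : (z + w).2 = z.2 + w.2. Proof. by []. Qed.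

Lemma P_summand m (A M : lmodType R) (i : {linear A -> M}) (p : {linear M -> A}) :
  (forall a, p (i a) = a) -> P m M -> P m A.
Proof.
elim: m A M i p => [|m IH] A M i p Hpi.
  case=> k [e He]; exists k, (p \o e) => a; case: (He (i a)) => x Hx.
  by exists x; rewrite /= Hx Hpi.
move=> HM; case: (HM) => k [e [He KM]]; exists k, (p \o e); split.
  move=> a; case: (He (i a)) => x Hx; by exists x; rewrite /= Hx Hpi.
have H1 : forall x, e x = 0 -> (p \o e) (idL _ x) = 0 by move=> x /= ->; rewrite linear0.
have H2 : forall x, (p \o e) x = 0 -> p (e x) = 0 by [].
have Hg : forall a (x y : M), (a *: x + y) - i (p (a *: x + y)) =
   a *: (x - i (p x)) + (y - i (p y)).
  by move=> a x y; rewrite !linearP /= scalerN scalerBr addrACA.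
pose g := mkLin Hg.
have Hpg : forall x, p (g x) = 0 by move=> x; rewrite mkLinE linearB /= Hpi subrr.
have KP : P m (kerT p).
  apply: (IH _ M (kincl p) (cores Hpg)); last exact: P_mono HM.
  move=> y; apply: kval_inj; rewrite coresE mkLinE ?kinclE.
  by rewrite (kval0 y) linear0 subr0.
apply: (P_ext (f := kmap H1) (g := kmap H2)) KM KP.
split; [|split].
- move=> x y /(congr1 (@kval _ _ _ _)); rewrite !kmapE !idLE; exact: kval_inj.
- move=> y; case: (He (kval y)) => x Hx.
  have Hx0 : (p \o e) x = 0 by rewrite /= Hx kval0.
  by exists (mkK Hx0); apply: kval_inj; rewrite kmapE mkKE.
- move=> x; split.
    move/kval_eq0; rewrite kmapE => Hx0.
    by exists (mkK Hx0); apply: kval_inj; rewrite kmapE mkKE idLE.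
  by case=> y <-; apply/kval_eq0; rewrite !kmapE idLE kval0.
Qed.

Lemma P_coker m (A B C : lmodType R) (f : {linear A -> B}) (g : {linear B -> C}) :
  short_exact f g -> P m A -> P m.+1 B -> P m.+1 C.
Proof.
move=> [Hf [Hg Hx]] HA [k [e [He KB]]].
have gf := ses_gf Hx.
exists k, (g \o e); split.
  move=> c; case: (Hg c) => b <-; case: (He b) => x <-; by exists x.
have H1 : forall x, e x = 0 -> (g \o e) (idL _ x) = 0 by move=> x /= ->; rewrite linear0.
have Hq : forall w : kerT (g \o e), exists a, f a = (e \o kincl _) w.
  by move=> w; apply/Hx; exact: kval0 w.
have [r Hr] := finvL Hf Hq.
apply: (P_ext (f := kmap H1) (g := r)) KB HA.
split; [|split].
- move=> x y /(congr1 (@kval _ _ _ _)); rewrite !kmapE !idLE; exact: kval_inj.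
- move=> a; case: (He (f a)) => x Hxa.
  have Hx0 : (g \o e) x = 0 by rewrite /= Hxa gf.
  by exists (mkK Hx0); apply: Hf; rewrite Hr /=.
- move=> w; split.
    move=> Hw; have Hw0 : e (kval w) = 0 by rewrite -[e _]/((e \o kincl _) w) -Hr Hw linear0.
    by exists (mkK Hw0); apply: kval_inj; rewrite kmapE mkKE idLE.
  by case=> y <-; apply: Hf; rewrite Hr /= kval0 linear0.
Qed.

Lemma P_ker m (A B C : lmodType R) (f : {linear A -> B}) (g : {linear B -> C}) :
  short_exact f g -> P m B -> P m.+1 C -> P m A.
Proof.
move=> [Hf [Hg Hx]] HB [k [eC [HC KC]]].
have gf := ses_gf Hx.
have [h Hh] := liftF eC Hg.
have Hpsi : forall a (z w : B * F k), g (a *: z + w).1 - eC (a *: z + w).2 =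
   a *: (g z.1 - eC z.2) + (g w.1 - eC w.2).
  by move=> a z w; rewrite /= !linearP /= scalerN scalerBr addrACA.
pose psi := mkLin Hpsi.
have psiE : forall z, psi z = g z.1 - eC z.2 by [].
have Hin : forall a (x y : F k), ((0 : B), a *: x + y) = a *: (0, x) + (0, y).
  by move=> a x y; congr pair; rewrite ?ad1 ?sc1 ?ad2 ?sc2 ?scaler0 ?addr0.
pose inr0 := mkLin Hin.
have H1 : forall x, eC x = 0 -> psi (inr0 x) = 0.
  by move=> x Hx0; rewrite psiE /= Hx0 linear0 subr0.
have Hfst : forall a (z w : B * F k), (a *: z + w).1 = a *: z.1 + w.1 by [].
pose fstL := mkLin Hfst.
pose pi := fstL \o kincl psi.
have KX : P m (kerT psi).
  apply: (P_ext (f := kmap H1) (g := pi)) KC HB.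
  split; [|split].
  - move=> x y /(congr1 (@kval _ _ _ _)); rewrite !kmapE => /(congr1 snd) /=.
    exact: kval_inj.
  - move=> b; case: (HC (g b)) => x Hxb.
    have Hz : psi (b, x) = 0 by rewrite psiE /= Hxb subrr.
    by exists (mkK Hz).
  - move=> z; split.
      rewrite /pi /= ?kinclE => Hz1.
      have Hz := kval0 z; rewrite psiE Hz1 linear0 sub0r in Hz.
      have Hz2 : eC (kval z).2 = 0 by rewrite -[eC _]opprK Hz oppr0.
      exists (mkK Hz2); apply: kval_inj; rewrite kmapE mkKE.
      by rewrite /= -Hz1; case: (kval z).
    by case=> y <-.
have Hinl : forall a (x y : A), (f (a *: x + y), (0 : F k)) = a *: (f x, 0) + (f y, 0).
  by move=> a x y; congr pair; rewrite ?ad1 ?sc1 ?ad2 ?sc2 ?scaler0 ?addr0 ?linearP.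
pose il := mkLin Hinl.
have Hil : forall a, psi (il a) = 0 by move=> a; rewrite psiE /= gf linear0 subr0.
have Hq0 : forall a (z w : B * F k), (a *: z + w).1 - h (a *: z + w).2 =
   a *: (z.1 - h z.2) + (w.1 - h w.2).
  by move=> a z w; rewrite /= !linearP /= scalerN scalerBr addrACA.
pose q0 := mkLin Hq0.
have Hq : forall w : kerT psi, exists a, f a = (q0 \o kincl psi) w.
  move=> w; apply/Hx; rewrite /= ?kinclE linearB /= Hh.
  by have := kval0 w; rewrite psiE.
have [r Hr] := finvL Hf Hq.
apply: (P_summand (i := cores Hil) (p := r)) KX.
by move=> a; apply: Hf; rewrite Hr /= linear0 subr0.
Qed.
End H2.


Section H3.
Variable R : pzRingType.
Notation F k := 'rV[R]_k.

Lemma FPn_P m (M : lmodType R) k (d : forall i, {linear F (k i.+1) -> F (k i)})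
  (eps : {linear F (k 0) -> M}) : free_complex_exact_upto m d eps -> P m M.
Proof.
elim: m M k d eps => [|m IH] M k d eps [Hs [H0 Hi]].
  by exists (k 0), eps.
exists (k 0), eps; split => //.
have Hd : forall x, eps (d 0 x) = 0.
  by move=> x; apply/(H0 erefl (d 0 x)); exists x.
apply: (IH _ (fun i => k i.+1) (fun i => d i.+1) (cores Hd)); split; [|split].
- move=> y; have := kval0 y; case/(H0 erefl) => a Ha.
  by exists a; apply: kval_inj; rewrite coresE.
- move=> Hm b; have Hx := Hi 0%N Hm b; split.
    by move/kval_eq0; rewrite coresE => /Hx.
  by move/Hx => Hb; apply/kval_eq0; rewrite coresE.
- by move=> i Hm; exact: Hi i.+1 Hm.
Qed.

Lemma zeroL_subproof (U V : lmodType R) a (x y : U) : (0 : V) = a *: 0 + 0.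
Proof. by rewrite scaler0 addr0. Qed.
Definition zeroL (U V : lmodType R) : {linear U -> V} :=
  @mkLin _ U V (fun _ => 0) (@zeroL_subproof U V).

Lemma P_FPn m (M : lmodType R) : P m M -> FPn m M.
Proof.
elim: m M => [|m IH] M.
  case=> k [e He]; exists (fun _ => k), (fun _ => zeroL _ _), e.
  by split => //; split.
case=> k [e [He KE]]; case: (IH _ KE) => k1 [d1 [eps1 [Hs [H0 Hi]]]].
pose k' i := match i with 0 => k | i'.+1 => k1 i' end.
pose d' : forall i, {linear F (k' i.+1) -> F (k' i)} :=
  fun i => match i return {linear F (k' i.+1) -> F (k' i)} with
           | 0 => (kincl e \o eps1) | i'.+1 => d1 i' end.
exists k', d', e; split; [|split] => //.
- move=> _ b; split.
    move=> Hb; case: (Hs (mkK Hb)) => a Ha; exists a.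
    by rewrite /d' /= Ha.
  by case=> a <-; rewrite /d' /=; exact: kval0.
- case => [|i] Hm.
    move=> b; rewrite /d' /=; split.
      by move/kval_eq0/(H0 Hm).
    by move/(H0 Hm) => ->.
  exact: Hi i Hm.
Qed.

Lemma FPn_P_iff m (M : lmodType R) : FPn m M <-> P m M.
Proof.
split; last exact: P_FPn.
by case=> k [d [eps H]]; exact: FPn_P H.
Qed.

Section Build.
Variable n : nat.
Hypothesis Ht : thick (@P R n).

Lemma closH (X : lmodType R) : P n X -> exists k (e : {linear F k -> X}), surj e /\ P n (kerT e).
Proof.
move=> HX; have [k [e He]] := P_fg HX.
exists k, e; split => //.
have Hs : short_exact (kincl e) e.
  split; [|split] => //; first exact: kval_inj.
  move=> b; split; first by move=> Hb; exists (mkK Hb).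
  by case=> a <-; exact: kval0.
apply: (proj2 (proj2 ((proj2 Ht) _ _ _ _ _ Hs))) => //; exact: P_free.
Qed.

Lemma SL (N : lmodType R) j (f : {linear F j -> N}) : P n (kerT f) ->
  exists j' (f' : {linear F j' -> F j}), P n (kerT f') /\ exact_at f' f.
Proof.
case/closH => k [e [He Ke]].
exists k, (kincl f \o e); split.
  have H : forall x, e x = 0 -> (kincl f \o e) (idL _ x) = 0.
    by move=> x /= ->.
  apply: (P_iso (phi := kmap H)) Ke.
    move=> x y /(congr1 (@kval _ _ _ _)); rewrite !kmapE !idLE; exact: kval_inj.
  move=> y; have Hy : e (kval y) = 0 by apply/kval_eq0; exact: kval0 y.
  by exists (mkK Hy); apply: kval_inj.
move=> b; split.
  by move=> Hb; case: (He (mkK Hb)) => a Ha; exists a; rewrite /= Ha.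
by case=> a <-; exact: kval0.
Qed.

Definition St := { p : nat * nat & { f : {linear F p.2 -> F p.1} | P n (kerT f) } }.
Definition step (s : St) : St :=
  let sj := constructive_indefinite_description _ (SL (svalP (projT2 s))) in
  let sf := constructive_indefinite_description _ (svalP sj) in
  existT _ ((projT1 s).2, sval sj) (exist _ (sval sf) (proj1 (svalP sf))).
Lemma step_exact s : exact_at (sval (projT2 (step s))) (sval (projT2 s)).
Proof. exact: (proj2 (svalP (constructive_indefinite_description _ (svalP (constructive_indefinite_description _ (SL (svalP (projT2 s)))))))). Qed.
Fixpoint iter_st (s0 : St) i := match i with 0 => s0 | i'.+1 => step (iter_st s0 i') end.
Definition kk s0 i := (projT1 (iter_st s0 i)).1.
Definition dd s0 i : {linear F (kk s0 i.+1) -> F (kk s0 i)} := sval (projT2 (iter_st s0 i)).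

Lemma thick_inf (M : lmodType R) : P n M -> FPinf M.
Proof.
case/closH => k0 [e0 [He0 K0]].
case: (SL K0) => j1 [f1 [K1 Hf1]].
pose s0 : St := existT _ (k0, j1) (exist _ f1 K1).
exists (kk s0), (dd s0), e0; split; [|split] => //.
move=> i; exact: step_exact.
Qed.
End Build.
End H3.


Lemma thick_ext (R : pzRingType) (W1 W2 : lmodType R -> Prop) :
  (forall M, W1 M <-> W2 M) -> thick W1 -> thick W2.
Proof.
move=> E [H1 H2]; split.
  by move=> A M /E HM HA; apply/E; exact: H1 HM HA.
move=> A B C f g Hs; have [Ha [Hb Hc]] := H2 A B C f g Hs.
split; [|split].
- by move=> /E x /E y; apply/E; exact: Ha.
- by move=> /E x /E y; apply/E; exact: Hb.
- by move=> /E x /E y; apply/E; exact: Hc.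
Qed.

End Helpers.
Import Helpers.

Theorem theorem2p3 (R : pzRingType) (n : nat) :
  [<-> n_coherent R n;
       thick (@FPn R n);
       forall M : lmodType R, FPn n M <-> FPinf M].
Proof.
have E := fun M => @FPn_P_iff R n M.
have E1 := fun M => @FPn_P_iff R n.+1 M.
tfae.
- move=> Hc.
  have Hc' : forall M : lmodType R, P n M -> P n.+1 M.
    by move=> M HM; apply: (proj1 (E1 M)); apply: Hc; exact: (proj2 (E M)).
  apply: (@thick_ext R (@P R n) (@FPn R n) (fun M => iff_sym (E M))); split.
    by move=> A M HM [i [p Hp]]; exact: P_summand Hp HM.
  move=> A B C f g Hs; split; [|split].
  + by move=> HA HB; exact: P_mono (P_coker Hs HA (Hc' _ HB)).
  + by move=> HA HC; exact: P_ext Hs HA HC.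
  + by move=> HB HC; exact: P_ker Hs HB (Hc' _ HC).
- move=> Ht M; split.
    move/(proj1 (E M)) => HM; exact: (@thick_inf R n (@thick_ext R (@FPn R n) (@P R n) E Ht) M HM).
  case=> k [d [eps [Hs [H0 Hi]]]]; exists k, d, eps.
  split; first exact: Hs.
  split; first by move=> _; exact: H0.
  by move=> i _; exact: Hi.
- move=> H M HM; case: (proj1 (H M) HM) => k [d [eps [Hs [H0 Hi]]]].
  exists k, d, eps; split; first exact: Hs.
  split; first by move=> _; exact: H0.
  by move=> i _; exact: Hi.
Qed.
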